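(* Let $X_n$ and $Y_n$ be the number of centered arcs and the number of pairs of coupled arcs, respectively, of a uniformly random perfect matching of $[2n]$. Then for all $k,\ell\ge0$, $$\lim_{n\to\infty}\Pr(X_n=k)=\frac{e^{-1/2}}{2^kk!},\qquad \lim_{n\to\infty}\Pr(Y_n=\ell)=\frac{e^{-1/4}}{4^\ell\ell!},$$ i.e. $X_n$ and $Y_n$ converge to Poisson laws with parameters $1/2$ and $1/4$, and moreover $$\lim_{n\to\infty}\Pr(X_n=k,Y_n=\ell)=\frac{e^{-3/4}}{2^k4^\ell k!\ell!}.$$
   Context: $[2n]=\{1,\dots,2n\}$. For $A\subseteq[2n]$ let $\overline{A}=\{2n+1-i: i\in A\}$. An arc $\{i,j\}$ of a perfect matching $M$ of $[2n]$ is centered if $\overline{\{i,j\}}=\{i,j\}$; coupled if it is not centered but $\overline{\{i,j\}}\in M$, in which case $\{i,j\}$ and $\overline{\{i,j\}}$ form a pair of coupled arcs. *)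

(* Defs.v *)
From mathcomp Require Import all_boot all_fingroup.
From Stdlib Require Import Reals.
Set Implicit Arguments. Unset Strict Implicit. Unset Printing Implicit Defensive.

(* Ground set [2n] is represented 0-indexed by 'I_(n.*2); the reflection
   i |-> 2n+1-i becomes rev_ord (value 2n-1-i). *)

Definition is_pm (m : nat) (s : {perm 'I_m}) : bool :=
  [forall i, (s (s i) == i) && (s i != i)].

Definition pm (m : nat) : {set {perm 'I_m}} := [set s | is_pm s].

Definition arcs (m : nat) (s : {perm 'I_m}) : {set {set 'I_m}} :=
  [set [set i; s i] | i : 'I_m].

Definition bar (m : nat) (A : {set 'I_m}) : {set 'I_m} := [set rev_ord i | i in A].

Definition centered_arcs (m : nat) (s : {perm 'I_m}) : {set {set 'I_m}} :=
  [set A in arcs s | bar A == A].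

Definition coupled_arcs (m : nat) (s : {perm 'I_m}) : {set {set 'I_m}} :=
  [set A in arcs s | (bar A != A) && (bar A \in arcs s)].

Definition coupled_pairs (m : nat) (s : {perm 'I_m}) : {set {set {set 'I_m}}} :=
  [set [set A; bar A] | A in coupled_arcs s].

Definition Xstat (m : nat) (s : {perm 'I_m}) : nat := #|centered_arcs s|.
Definition Ystat (m : nat) (s : {perm 'I_m}) : nat := #|coupled_pairs s|.

Definition prob_pm (n : nat) (P : pred {perm 'I_(n.*2)}) : R :=
  (INR #|[set s in pm (n.*2) | P s]| / INR #|pm (n.*2)|)%R.

(* Main.v *)
From Stdlib Require Import Reals Factorial.
Require Import Defs.
From mathcomp Require Import all_boot all_fingroup.
From mathcomp Require Import all_order all_algebra.
From mathcomp Require Import Rstruct.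
From mathcomp Require Import zify ring lra.
Set Implicit Arguments. Unset Strict Implicit. Unset Printing Implicit Defensive.

Lemma card_pairs (U : finType) (f : U -> U) (D : {set U}) :
  (forall x, f (f x) = x) -> (forall x, x \in D -> f x \in D) ->
  (forall x, x \in D -> f x != x) ->
  #|D| = 2 * #|[set [set x; f x] | x in D]|.
Proof.
move=> ff fD fne.
set P := [set [set x; f x] | x in D].
have partP : partition P D.
  apply/and3P; split.
  - apply/eqP/setP => y; apply/bigcupP/idP.
      by case=> A /imsetP [x xD ->] /set2P [->|->] //; apply: fD.
    move=> yD; exists [set y; f y]; first by apply/imsetP; exists y.
    exact: set21.
  - apply/trivIsetP => A B /imsetP [x xD ->] /imsetP [y yD ->] neq.
    apply/pred0P => z /=; apply/negP => /andP [] /set2P h1 /set2P h2.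
    move/negP: neq; apply; apply/eqP.
    have E : forall u v, v = u \/ v = f u -> [set u; f u] = [set v; f v].
      move=> u v [->|->] //; by rewrite ff setUC.
    have finj : injective f := can_inj ff.
    case: h1 => ? ; subst z.
      by apply: E; case: h2 => ->; [left|right; rewrite ff].
    case: h2 => h2.
      by rewrite -(E y x) //; right; rewrite -h2 ff.
    by rewrite -(E y x) //; left; apply: finj.
  - apply/imsetP => [[x xD]] /setP /(_ x); by rewrite set21 inE.
rewrite (card_partition partP) mulnC -sum_nat_const; apply: eq_bigr => A /imsetP [x xD ->].
by rewrite cards2 eq_sym fne.
Qed.

Definition P1 m (s : {perm 'I_m}) := [set i | s i == rev_ord i].
Definition P2 m (s : {perm 'I_m}) :=
  [set i | (s i != rev_ord i) && (s (rev_ord i) == rev_ord (s i))].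

Lemma pmP m (s : {perm 'I_m}) : s \in pm m -> (forall i, s (s i) = i) /\ (forall i, s i != i).
Proof.
rewrite inE => /forallP h; split => i; by case/andP: (h i) => /eqP.
Qed.

Lemma rev_neq n (i : 'I_(n.*2)) : rev_ord i != i.
Proof.
apply/eqP => /(congr1 val) /= h.
have := ltn_ord i; lia.
Qed.

Lemma bar2 m (i j : 'I_m) : bar [set i; j] = [set rev_ord i; rev_ord j].
Proof. by rewrite /bar imsetU1 imset_set1. Qed.

Lemma barK m (A : {set 'I_m}) : bar (bar A) = A.
Proof. by rewrite /bar -imset_comp (eq_imset _ (@rev_ordK m)) imset_id. Qed.

Section PM.
Variable n : nat.
Local Notation m := (n.*2).
Variable s : {perm 'I_m}.
Hypothesis spm : s \in pm m.
Let ss : forall i, s (s i) = i. Proof. by case: (pmP spm). Qed.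
Let sne : forall i, s i != i. Proof. by case: (pmP spm). Qed.
Local Notation r := (@rev_ord m).

Lemma bar_arc_eq i : (bar [set i; s i] == [set i; s i]) = (s i == r i).
Proof.
rewrite bar2; apply/eqP/eqP => h.
  have : r i \in [set i; s i] by rewrite -h set21.
  case/set2P => // e; by move: (rev_neq i); rewrite e eqxx.
by rewrite h rev_ordK setUC.
Qed.

Lemma bar_arc_in i : ([set r i; r (s i)] \in arcs s) = (s (r i) == r (s i)).
Proof.
apply/imsetP/eqP => [[j _ h]|h]; last by exists (r i); rewrite // h.
have h1 : r i \in [set j; s j] by rewrite -h set21.
have h2 : r (s i) \in [set j; s j] by rewrite -h set22.
have ne : r (s i) != r i by rewrite (inj_eq rev_ord_inj) sne.
case/set2P: h1 => e1.
  case/set2P: h2 => e2; first by move: ne; rewrite e1 e2 eqxx.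
  by rewrite e1 e2.
case/set2P: h2 => e2; last by move: ne; rewrite e1 e2 eqxx.
by rewrite e1 ss e2.
Qed.

Lemma centered_E : centered_arcs s = [set [set i; s i] | i in P1 s].
Proof.
apply/setP => A; rewrite inE; apply/andP/imsetP.
  case=> /imsetP [i _ ->] hb; exists i => //; by rewrite inE -bar_arc_eq.
case=> i; rewrite inE => hi ->; split; first by apply/imsetP; exists i.
by rewrite bar_arc_eq.
Qed.

Lemma coupled_E : coupled_arcs s = [set [set i; s i] | i in P2 s].
Proof.
apply/setP => A; rewrite inE; apply/andP/imsetP.
  case=> /imsetP [i _ ->] /andP [hb ha]; exists i => //.
  by rewrite inE -bar_arc_eq hb -bar_arc_in -bar2.
case=> i; rewrite inE => /andP [h1 h2] ->; split; first by apply/imsetP; exists i.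
by rewrite bar_arc_eq h1 bar2 bar_arc_in.
Qed.

Lemma X_P1 : #|P1 s| = 2 * Xstat s.
Proof.
rewrite /Xstat centered_E; apply: card_pairs => // i; rewrite !inE => /eqP h.
by rewrite ss h rev_ordK.
Qed.

Lemma Y_P2 : #|P2 s| = 4 * Ystat s.
Proof.
have -> : #|P2 s| = 2 * #|coupled_arcs s|.
  rewrite coupled_E; apply: card_pairs => // i; rewrite !inE => /andP [h1 /eqP h2].
  rewrite ss; apply/andP; split.
    apply: contra h1 => /eqP e; by rewrite {2}e rev_ordK.
  by rewrite -h2 ss.
rewrite /Ystat /coupled_pairs (_ : 4 = 2 * 2) // -mulnA; congr (_ * _).
apply: card_pairs => //; first exact: barK.
  move=> A; rewrite !inE => /andP [ha /andP [hb hc]].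
  by rewrite barK ha hc eq_sym hb.
by move=> A; rewrite inE => /andP [_ /andP [] ].
Qed.

End PM.

Lemma tpE (T : finType) (x y z : T) :
  tperm x y z = if z == x then y else if z == y then x else z.
Proof.
case: tpermP => [->|->|/eqP/negbTE-> /eqP/negbTE->]; rewrite ?eqxx //.
by case: eqP.
Qed.

Section Swap.
Variable n : nat.
Local Notation m := (n.*2).
Local Notation r := (@rev_ord m).

Lemma req (a b : 'I_m) : (r a == b) = (a == r b).
Proof. by apply/eqP/eqP => [<-|->]; rewrite rev_ordK. Qed.

Definition swp (x y : 'I_m) : {perm 'I_m} :=
  if y == r x then tperm x y else (tperm x y * tperm (r x) (r y))%g.

Lemma swp_x x y : swp x y x = y.
Proof.
rewrite /swp; case: eqP => [->|/eqP ne]; first by rewrite tpermL.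
by rewrite permM tpermL tpermD ?rev_neq // eq_sym.
Qed.

Lemma swp_fix x y z : z != x -> z != y -> z != r x -> z != r y -> swp x y z = z.
Proof.
move=> h1 h2 h3 h4; rewrite /swp; case: eqP => _; first by rewrite tpermD // eq_sym.
by rewrite permM !tpermD // eq_sym.
Qed.

Lemma swp_comm x y z : swp x y (r z) = r (swp x y z).
Proof.
apply: val_inj; rewrite /swp.
have := ltn_ord x; have := ltn_ord y; have := ltn_ord z.
case: eqP => [->|/eqP ne]; rewrite ?permM !tpE /=;
  rewrite -?val_eqE /= ?(fun_if val) /=.
  by repeat case: ifP; lia.
by move: ne; rewrite -?val_eqE /=; repeat case: ifP; lia.
Qed.
End Swap.


Section Conj.
Variable n : nat.
Local Notation m := (n.*2).
Local Notation r := (@rev_ord m).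

Definition cj (g s : {perm 'I_m}) : {perm 'I_m} := (s ^ g)%g.
Definition rcomm (g : {perm 'I_m}) := forall z, g (r z) = r (g z).

Lemma cjE g s x : cj g s x = g (s (g^-1%g x)).
Proof. by rewrite /cj conjgE !permM. Qed.

Lemma cj_pm1 g s : s \in pm m -> cj g s \in pm m.
Proof.
case/pmP => ss sne; rewrite inE; apply/forallP => x; rewrite !cjE permK ss permKV eqxx /=.
apply: contra (sne (g^-1%g x)) => /eqP h; apply/eqP.
by rewrite -{2}h permK.
Qed.

Lemma cj_pm g s : (cj g s \in pm m) = (s \in pm m).
Proof.
apply/idP/idP; last exact: cj_pm1.
by move/(cj_pm1 g^-1%g); rewrite /cj conjgK.
Qed.

Lemma rcommV g : rcomm g -> forall z, g^-1%g (r z) = r (g^-1%g z).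
Proof.
move=> h z; apply: (@perm_inj _ g); by rewrite h !permKV.
Qed.

Lemma P1_cj g s x : rcomm g -> (x \in P1 (cj g s)) = (g^-1%g x \in P1 s).
Proof.
move=> h; rewrite -(permKV g x); move: (g^-1%g x) => y.
by rewrite !inE cjE !permK -!h !(inj_eq (@perm_inj _ g)).
Qed.

Lemma P2_cj g s x : rcomm g -> (x \in P2 (cj g s)) = (g^-1%g x \in P2 s).
Proof.
move=> h; rewrite -(permKV g x); move: (g^-1%g x) => y.
by rewrite !inE !cjE !permK -!h !permK !(inj_eq (@perm_inj _ g)).
Qed.

Lemma card_cj (Pf : {perm 'I_m} -> {set 'I_m}) g s :
  (forall x, (x \in Pf (cj g s)) = (g^-1%g x \in Pf s)) -> #|Pf (cj g s)| = #|Pf s|.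
Proof.
move=> h; have -> : Pf (cj g s) = g @: Pf s.
  apply/setP => x; by rewrite h -{2}(permKV g x) mem_imset //; apply: perm_inj.
by rewrite card_imset //; apply: perm_inj.
Qed.

Lemma X_cj g s : rcomm g -> s \in pm m -> Xstat (cj g s) = Xstat s.
Proof.
move=> h spm; apply/eqP; rewrite -(eqn_pmul2l (isT : 0 < 2)) -!X_P1 ?cj_pm //.
by rewrite (card_cj (fun x => P1_cj s x h)).
Qed.

Lemma Y_cj g s : rcomm g -> s \in pm m -> Ystat (cj g s) = Ystat s.
Proof.
move=> h spm; apply/eqP; rewrite -(eqn_pmul2l (isT : 0 < 4)) -!Y_P2 ?cj_pm //.
by rewrite (card_cj (fun x => P2_cj s x h)).
Qed.

Lemma sum_cj g (F : {perm 'I_m} -> nat) (Q Q' : pred {perm 'I_m}) :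
  (forall s, s \in pm m -> F (cj g s) = F s) -> (forall s, Q (cj g s) = Q' s) ->
  \sum_(s in pm m | Q' s) F s = \sum_(s in pm m | Q s) F s.
Proof.
move=> hF hQ; rewrite [RHS](reindex (cj g)) /=.
  apply: eq_big => s; first by rewrite cj_pm hQ.
  by case/andP => sp _; rewrite hF.
apply: onW_bij; exists (cj g^-1%g) => s; [exact: conjgK | exact: conjgKV].
Qed.

Lemma rcomm_swp x y : rcomm (swp x y).
Proof. move=> z; exact: swp_comm. Qed.

Lemma sum_cardP (Pf : {perm 'I_m} -> {set 'I_m}) (F : {perm 'I_m} -> nat) (i0 : 'I_m) :
  (forall g s x, rcomm g -> (x \in Pf (cj g s)) = (g^-1%g x \in Pf s)) ->
  (forall g s, rcomm g -> s \in pm m -> F (cj g s) = F s) ->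
  \sum_(s in pm m) #|Pf s| * F s = m * \sum_(s in pm m | i0 \in Pf s) F s.
Proof.
move=> hP hF.
under eq_bigr => s _ do rewrite -sum1_card big_distrl /= big_mkcond /=.
rewrite exchange_big /=.
transitivity (\sum_(i : 'I_m) \sum_(s in pm m | i0 \in Pf s) F s);
  last by rewrite sum_nat_const card_ord.
apply: eq_bigr => i _.
rewrite -big_mkcondr /=.
under eq_bigr => s _ do rewrite mul1n.
apply: (sum_cj (g := swp i i0)).
  by move=> s sp; apply: hF => //; apply: rcomm_swp.
have e : (swp i i0)^-1%g i0 = i by apply: (@perm_inj _ (swp i i0)); rewrite permKV swp_x.
move=> s; rewrite hP; last exact: rcomm_swp.
by rewrite e.
Qed.
End Conj.

Section Ext.
Variables (m M c : nat).
Hypothesis HM : m + c.*2 = M.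
Variable o : {perm 'I_M}.

Lemma e_proof (j : 'I_m) : j + c < M.
Proof. have := ltn_ord j; lia. Qed.

Definition e (j : 'I_m) : 'I_M := Ordinal (e_proof j).

Lemma e_inj : injective e.
Proof. move=> j1 j2 /(congr1 val) /= h; apply: val_inj => /=; lia. Qed.

Definition inR (x : 'I_M) := [exists j, e j == x].

Lemma inRE x : inR x = (c <= x) && (x < c + m).
Proof.
apply/existsP/andP => [[j /eqP <-]|[h1 h2]] /=.
  have := ltn_ord j; split; lia.
have hj : x - c < m by lia.
by exists (Ordinal hj); apply/eqP/val_inj => /=; lia.
Qed.

Lemma inR_e j : inR (e j).
Proof. by apply/existsP; exists j. Qed.

Lemma e_rev j : e (rev_ord j) = rev_ord (e j).
Proof. apply: val_inj => /=; have := ltn_ord j; lia. Qed.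

Lemma inR_rev x : inR (rev_ord x) = inR x.
Proof. rewrite !inRE /=; have := ltn_ord x; lia. Qed.

Hypothesis ho1 : forall x, ~~ inR x -> ~~ inR (o x).
Hypothesis ho2 : forall x, ~~ inR x -> o (o x) = x.
Hypothesis ho3 : forall x, ~~ inR x -> o x != x.

Definition extf (t : {perm 'I_m}) (x : 'I_M) : 'I_M :=
  if [pick j | e j == x] is Some j then e (t j) else o x.

Lemma extf_e t j : extf t (e j) = e (t j).
Proof.
rewrite /extf; case: pickP => [j' /eqP /e_inj -> //|/(_ j)]; by rewrite eqxx.
Qed.

Lemma extf_o t x : ~~ inR x -> extf t x = o x.
Proof.
move=> hx; rewrite /extf; case: pickP => // j /eqP ej.
by move: hx; rewrite -ej inR_e.
Qed.

Lemma inR_case x : inR x -> {j | x = e j}.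
Proof.
move=> h; case: (pickP (fun j => e j == x)) => [j /eqP <-|h0]; first by exists j.
by exfalso; move/existsP: h => [j]; rewrite h0.
Qed.

Lemma extf_inj t : injective (extf t).
Proof.
move=> x y.
case: (boolP (inR x)) => [/inR_case [j ->]|hx];
case: (boolP (inR y)) => [/inR_case [k ->]|hy].
- by rewrite !extf_e => /e_inj /perm_inj ->.
- by rewrite extf_e extf_o // => h; move: (ho1 hy); rewrite -h inR_e.
- by rewrite extf_e extf_o // => h; move: (ho1 hx); rewrite h inR_e.
- by rewrite !extf_o // => /perm_inj.
Qed.

Definition ext t : {perm 'I_M} := perm (@extf_inj t).

Lemma ext_e t j : ext t (e j) = e (t j).
Proof. by rewrite permE extf_e. Qed.

Lemma ext_o t x : ~~ inR x -> ext t x = o x.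
Proof. by move=> h; rewrite permE extf_o. Qed.

Lemma ext_pm t : t \in pm m -> ext t \in pm M.
Proof.
case/pmP => ss sne; rewrite inE; apply/forallP => x.
case: (boolP (inR x)) => [/inR_case [j ->]|hx].
  by rewrite !ext_e ss eqxx (inj_eq e_inj) sne.
by rewrite !ext_o ?ho2 ?eqxx ?ho3 ?ho1.
Qed.

Lemma ext_inj : injective ext.
Proof.
move=> t1 t2 h; apply/permP => j; apply: e_inj; by rewrite -!ext_e h.
Qed.

Lemma ext_onto s : s \in pm M -> (forall x, ~~ inR x -> s x = o x) ->
  exists2 t, t \in pm m & s = ext t.
Proof.
case/pmP => ss sne hs.
have hR : forall j, inR (s (e j)).
  move=> j; apply: contraT => hn.
  have := ho1 hn; by rewrite -hs // ss inR_e.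
pose tf j := odflt j [pick k | e k == s (e j)].
have tfE : forall j, e (tf j) = s (e j).
  move=> j; rewrite /tf; case: pickP => [k /eqP //|h0].
  case: (inR_case (hR j)) => k hk; by move: (h0 k); rewrite hk eqxx.
have tf_inj : injective tf.
  move=> j1 j2 h; apply: e_inj; apply: (@perm_inj _ s); by rewrite -!tfE h.
pose t := perm tf_inj.
have tE : forall j, e (t j) = s (e j) by move=> j; rewrite permE tfE.
exists t.
  rewrite inE; apply/forallP => j; apply/andP; split.
    by apply/eqP/e_inj; rewrite !tE ss.
  by rewrite -(inj_eq e_inj) tE sne.
apply/permP => x; case: (boolP (inR x)) => [/inR_case [j ->]|hx].
  by rewrite ext_e tE.
by rewrite ext_o // hs.
Qed.

Lemma sum_ext (F : {perm 'I_M} -> nat) (Q : pred {perm 'I_M}) :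
  (forall s, s \in pm M -> Q s = [forall x, ~~ inR x ==> (s x == o x)]) ->
  \sum_(s in pm M | Q s) F s = \sum_(t in pm m) F (ext t).
Proof.
move=> hQ.
have ei : {in pm m &, injective ext} by move=> ? ? _ _; apply: ext_inj.
rewrite -(big_imset _ ei) /=.
apply: eq_bigl => s; apply/andP/imsetP.
  case=> sp; rewrite hQ // => /forallP h.
  case: (ext_onto sp) => [x hx|t tp ->]; last by exists t.
  by apply/eqP; move: (h x); rewrite hx.
case=> t tp ->; split; first exact: ext_pm.
rewrite hQ ?ext_pm //; apply/forallP => x; apply/implyP => hx; by rewrite ext_o.
Qed.

Lemma card_split (A : {set 'I_M}) (B : {set 'I_m}) (K : {set 'I_M}) :
  (forall j, (e j \in A) = (j \in B)) -> (forall x, ~~ inR x -> (x \in A) = (x \in K)) ->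
  K \subset [set x | ~~ inR x] -> #|A| = #|B| + #|K|.
Proof.
move=> hB hK sK.
rewrite -(cardsID [set x | inR x] A); congr (_ + _).
  have -> : A :&: [set x | inR x] = e @: B.
    apply/setP => x; rewrite !inE; case: (boolP (inR x)) => [/inR_case [j ->]|hx].
      by rewrite mem_imset ?hB ?andbT //; apply: e_inj.
    rewrite andbF; apply/esym/imsetP => [[j _ ej]]; by move: hx; rewrite ej inR_e.
  by rewrite card_imset //; apply: e_inj.
apply: eq_card => x; rewrite !inE; case: (boolP (inR x)) => hx /=.
  by apply/esym/negbTE; apply: contraL hx => hxK; move/subsetP: sK => /(_ x hxK); rewrite inE.
by rewrite hK // ?andbT.
Qed.

Lemma P1_ext t : #|P1 (ext t)| = #|P1 t| + #|[set x | ~~ inR x & o x == rev_ord x]|.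
Proof.
apply: card_split.
- by move=> j; rewrite !inE ext_e -e_rev (inj_eq e_inj).
- by move=> x hx; rewrite !inE hx ext_o.
- by apply/subsetP => x; rewrite !inE => /andP [].
Qed.

Lemma P2_ext t : #|P2 (ext t)| =
  #|P2 t| + #|[set x | ~~ inR x & (o x != rev_ord x) && (o (rev_ord x) == rev_ord (o x))]|.
Proof.
apply: card_split.
- by move=> j; rewrite !inE -e_rev !ext_e -!e_rev !(inj_eq e_inj).
- by move=> x hx; rewrite !inE hx !ext_o // inR_rev.
- by apply/subsetP => x; rewrite !inE => /andP [].
Qed.

Lemma card_notR : #|[set x | ~~ inR x]| = c.*2.
Proof.
have := cardsC [set x | inR x]; rewrite card_ord.
have -> : [set x | inR x] = e @: [set: 'I_m].
  apply/setP => x; rewrite inE; apply/idP/imsetP => [/inR_case [j ->]|[j _ ->]].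
    by exists j.
  exact: inR_e.
rewrite card_imset; last exact: e_inj.
rewrite cardsT card_ord.
have -> : ~: (e @: [set: 'I_m]) = [set x | ~~ inR x].
  apply/setP => x; rewrite !inE; congr (~~ _); apply/imsetP/idP => [[j _ ->]|/inR_case [j ->]].
    exact: inR_e.
  by exists j.
lia.
Qed.

End Ext.

Definition Mab n a b := \sum_(s in pm (n.*2)) (Xstat s ^_ a * Ystat s ^_ b).
Fixpoint df n := if n is n'.+1 then n'.*2.+1 * df n' else 1.

Section Inst1.
Variable n : nat.
Local Notation m := (n.*2).
Local Notation M := ((n.+1).*2).
Lemma HM1 : m + 1.*2 = M. Proof. lia. Qed.
Lemma lt0M1 : 0 < M. Proof. lia. Qed.
Definition x0 : 'I_M := Ordinal lt0M1.
Local Notation r := (@rev_ord M).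
Definition o1 : {perm 'I_M} := tperm x0 (r x0).
Local Notation inR1 := (inR HM1).

Lemma notR1 x : ~~ inR1 x = (x == x0) || (x == r x0).
Proof. rewrite inRE -!val_eqE /=; have := ltn_ord x; lia. Qed.

Lemma o1_r x : ~~ inR1 x -> o1 x = r x.
Proof.
rewrite notR1 /o1 => /orP [] /eqP ->; first by rewrite tpermL.
by rewrite tpermR rev_ordK.
Qed.

Lemma ho1_1 x : ~~ inR1 x -> ~~ inR1 (o1 x).
Proof. move=> h; by rewrite o1_r // inR_rev. Qed.
Lemma ho2_1 x : ~~ inR1 x -> o1 (o1 x) = x.
Proof. move=> h; by rewrite o1_r ?o1_r ?rev_ordK // inR_rev. Qed.
Lemma ho3_1 x : ~~ inR1 x -> o1 x != x.
Proof. move=> h; by rewrite o1_r // rev_neq. Qed.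

Definition ext1 := ext ho1_1.
Lemma ext1_pm t : t \in pm m -> ext1 t \in pm M.
Proof. exact: (ext_pm ho1_1 ho2_1 ho3_1). Qed.

Lemma sum_ext1 (F : {perm 'I_M} -> nat) :
  \sum_(s in pm M | s x0 == r x0) F s = \sum_(t in pm m) F (ext1 t).
Proof.
apply: (sum_ext ho1_1 ho2_1 ho3_1) => s sp; case/pmP: sp => ss _.
apply/eqP/forallP => [h x|/(_ x0)]; last by rewrite notR1 eqxx /= /o1 tpermL => /eqP.
apply/implyP; rewrite notR1 => /orP [] /eqP ->; first by rewrite h /o1 tpermL.
by rewrite /o1 tpermR -h ss.
Qed.

Lemma X_ext1 t : t \in pm m -> Xstat (ext1 t) = (Xstat t).+1.
Proof.
move=> tp; apply/eqP; rewrite -(eqn_pmul2l (isT : 0 < 2)) -X_P1 ?ext1_pm //.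
rewrite /ext1 P1_ext X_P1 //.
have -> : [set x | ~~ inR1 x & o1 x == r x] = [set x | ~~ inR1 x].
  apply/setP => x; rewrite !inE; case: (boolP (inR1 x)) => //= h.
  apply/eqP; exact: o1_r.
by rewrite (card_notR HM1); lia.
Qed.

Lemma Y_ext1 t : t \in pm m -> Ystat (ext1 t) = Ystat t.
Proof.
move=> tp; apply/eqP; rewrite -(eqn_pmul2l (isT : 0 < 4)) -Y_P2 ?ext1_pm //.
rewrite /ext1 P2_ext Y_P2 //.
have -> : [set x | ~~ inR1 x & (o1 x != r x) && (o1 (r x) == r (o1 x))] = set0.
  apply/setP => x; rewrite !inE; case: (boolP (inR1 x)) => //= h.
  by rewrite (o1_r h) eqxx.
by rewrite cards0 addn0.
Qed.

Lemma card_pm1 : #|pm M| = m.+1 * #|pm m|.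
Proof.
rewrite -sum1_card (partition_big (fun s : {perm 'I_M} => s x0) xpredT) //=.
have -> : \sum_(j < M) \sum_(s in pm M | s x0 == j) 1 =
          \sum_(j < M | j != x0) \sum_(s in pm M | s x0 == r x0) 1.
  rewrite (bigD1 x0) //= big1 ?add0n; last first.
    by move=> s /andP [/pmP [_ sne] /eqP e]; move: (sne x0); rewrite e eqxx.
  apply: eq_bigr => j hj.
  apply: (sum_cj (g := tperm j (r x0))) => // s.
  rewrite cjE tpermV (@tpermD _ j (r x0) x0) ?rev_neq //.
  by rewrite (can2_eq (tpermK _ _) (tpermK _ _)) tpermR.
rewrite sum_nat_const sum_ext1 sum1_card.
have -> : #|(fun i : 'I_M => i != x0)| = M.-1 by rewrite -[in RHS](card_ord M) -(cardC1 x0); apply: eq_card => i; rewrite !inE.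
by congr (_ * _); lia.
Qed.

Lemma Mab_S a b : Mab n.+1 a.+1 b = n.+1 * Mab n a b.
Proof.
apply/eqP; rewrite -(eqn_pmul2l (isT : 0 < 2)); apply/eqP.
rewrite /Mab big_distrr /=.
transitivity (\sum_(s in pm M) #|P1 s| * ((Xstat s).-1 ^_ a * Ystat s ^_ b)).
  by apply: eq_bigr => s sp; rewrite X_P1 // ffactnS -!mulnA.
rewrite (@sum_cardP n.+1 (@P1 _) _ x0); first last.
- by move=> g s gc sp; rewrite X_cj // Y_cj.
- by move=> g s x gc; rewrite P1_cj.
rewrite (eq_bigl (fun s => (s \in pm M) && (s x0 == r x0))); last first.
  by move=> s; rewrite /P1 [x0 \in _]inE.
rewrite sum_ext1 mulnA mul2n; congr (_ * _).
by apply: eq_bigr => t tp; rewrite X_ext1 // Y_ext1.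
Qed.

End Inst1.

Section Inst2.
Variable n : nat.
Local Notation m := (n.*2).
Local Notation M := ((n.+2).*2).
Lemma HM2 : m + 2.*2 = M. Proof. lia. Qed.
Lemma lt0M2 : 0 < M. Proof. lia. Qed.
Lemma lt1M2 : 1 < M. Proof. lia. Qed.
Definition y0 : 'I_M := Ordinal lt0M2.
Definition y1 : 'I_M := Ordinal lt1M2.
Local Notation r := (@rev_ord M).
Definition o2 : {perm 'I_M} := (tperm y0 y1 * tperm (r y0) (r y1))%g.
Local Notation inR2 := (inR HM2).

Lemma notR2 x : ~~ inR2 x = [|| x == y0, x == y1, x == r y1 | x == r y0].
Proof. rewrite inRE -!val_eqE /=; have := ltn_ord x; lia. Qed.


Ltac o2tac := apply: val_inj; rewrite permM !tpE -!val_eqE /=; by repeat case: ifP => /=; lia.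
Lemma o2_y0 : o2 y0 = y1. Proof. o2tac. Qed.
Lemma o2_y1 : o2 y1 = y0. Proof. o2tac. Qed.
Lemma o2_ry0 : o2 (r y0) = r y1. Proof. o2tac. Qed.
Lemma o2_ry1 : o2 (r y1) = r y0. Proof. o2tac. Qed.

Lemma ho1_2 x : ~~ inR2 x -> ~~ inR2 (o2 x).
Proof.
rewrite !notR2 => /or4P [] /eqP ->;
  rewrite ?(o2_y0, o2_y1, o2_ry0, o2_ry1) eqxx ?orbT //.
Qed.
Lemma ho2_2 x : ~~ inR2 x -> o2 (o2 x) = x.
Proof.
rewrite !notR2 => /or4P [] /eqP ->; by rewrite ?(o2_y0, o2_y1, o2_ry0, o2_ry1).
Qed.
Lemma ho3_2 x : ~~ inR2 x -> o2 x != x.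
Proof.
rewrite !notR2 => /or4P [] /eqP ->; rewrite ?(o2_y0, o2_y1, o2_ry0, o2_ry1);
  rewrite -val_eqE /=; lia.
Qed.

Definition ext2 := ext ho1_2.
Lemma ext2_pm t : t \in pm m -> ext2 t \in pm M.
Proof. exact: (ext_pm ho1_2 ho2_2 ho3_2). Qed.

Lemma sum_ext2 (F : {perm 'I_M} -> nat) :
  \sum_(s in pm M | (s y0 == y1) && (s (r y0) == r y1)) F s = \sum_(t in pm m) F (ext2 t).
Proof.
apply: (sum_ext ho1_2 ho2_2 ho3_2) => s sp; case/pmP: sp => ss _.
apply/andP/forallP => [[/eqP h1 /eqP h2] x|h]; last first.
  move: (h y0) (h (r y0)); rewrite !notR2 !eqxx ?orbT /= o2_y0 o2_ry0; by split.
apply/implyP; rewrite notR2 => /or4P [] /eqP ->;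
  rewrite ?(o2_y0, o2_y1, o2_ry0, o2_ry1) ?h1 ?h2 //.
- by rewrite -h1 ss.
- by rewrite -h2 ss.
Qed.

Lemma X_ext2 t : t \in pm m -> Xstat (ext2 t) = Xstat t.
Proof.
move=> tp; apply/eqP; rewrite -(eqn_pmul2l (isT : 0 < 2)) -X_P1 ?ext2_pm //.
rewrite /ext2 P1_ext X_P1 //.
have -> : [set x | ~~ inR2 x & o2 x == r x] = set0.
  apply/setP => x; rewrite !inE; case: (boolP (inR2 x)) => //= h.
  move: h; rewrite notR2 => /or4P [] /eqP ->;
    rewrite ?(o2_y0, o2_y1, o2_ry0, o2_ry1) -val_eqE /=; lia.
by rewrite cards0 addn0.
Qed.

Lemma Y_ext2 t : t \in pm m -> Ystat (ext2 t) = (Ystat t).+1.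
Proof.
move=> tp; apply/eqP; rewrite -(eqn_pmul2l (isT : 0 < 4)) -Y_P2 ?ext2_pm //.
rewrite /ext2 P2_ext Y_P2 //.
have -> : [set x | ~~ inR2 x & (o2 x != r x) && (o2 (r x) == r (o2 x))] = [set x | ~~ inR2 x].
  apply/setP => x; rewrite !inE; case: (boolP (inR2 x)) => //= h.
  move: h; rewrite notR2 => /or4P [] /eqP ->; rewrite ?rev_ordK;
    rewrite ?(o2_y0, o2_y1, o2_ry0, o2_ry1) ?rev_ordK eqxx andbT -val_eqE /=; lia.
by rewrite (card_notR HM2); lia.
Qed.

Lemma sum_P2_split (F : {perm 'I_M} -> nat) :
  (forall g s, rcomm g -> s \in pm M -> F (cj g s) = F s) ->
  \sum_(s in pm M | y0 \in P2 s) F s =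
  (M - 2) * \sum_(s in pm M | (s y0 == y1) && (s (r y0) == r y1)) F s.
Proof.
move=> hF.
rewrite (partition_big (fun s : {perm 'I_M} => s y0) xpredT) //=.
rewrite (bigID (fun j => (j == y0) || (j == r y0))) /= big1 ?add0n; last first.
  move=> j /orP [] /eqP -> ; apply: big_pred0 => s;
    apply/negP => /andP [/andP [/pmP [_ sne] ] ]; rewrite inE => /andP [h1 _] /eqP h2.
    by move: (sne y0); rewrite h2 eqxx.
  by move: h1; rewrite h2 eqxx.
have -> : M - 2 = #|[pred j : 'I_M | ~~ ((j == y0) || (j == r y0))]|.
  have := cardsC [set y0; r y0]; rewrite cards2 eq_sym rev_neq card_ord => h.
  have -> : #|[pred j : 'I_M | ~~ ((j == y0) || (j == r y0))]| = #|~: [set y0; r y0]|.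
    by apply: eq_card => j; rewrite !inE.
  lia.
rewrite -sum_nat_const; apply: eq_bigr => j hj.
have hj0 : j != y0 by move: hj; rewrite negb_or => /andP [].
have hj1 : j != r y0 by move: hj; rewrite negb_or => /andP [].
have hy : forall s : {perm 'I_M}, s \in pm M ->
   ((y0 \in P2 s) && (s y0 == j)) = (s y0 == j) && (s (r y0) == r j).
  move=> s sp; rewrite inE; case: (s y0 =P j) => [->|_]; rewrite ?andbF ?andbT //=.
  by rewrite hj1.
rewrite (eq_bigl (fun s => (s \in pm M) && ((s y0 == j) && (s (r y0) == r j)))); last first.
  move=> s; case: (boolP (s \in pm M)) => //= sp; by rewrite hy.
pose g := swp j y1.
have gj : g j = y1 by rewrite /g swp_x.
have gfix : g y0 = y0.
  rewrite /g swp_fix // eq_sym //.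
  by rewrite req.
have gfix' : g (r y0) = r y0 by rewrite /g swp_comm -/g gfix.
have gV : forall x, g x = x -> g^-1%g x = x.
  by move=> x hx; rewrite -{1}hx permK.
apply: (sum_cj (g := g)); first by move=> s sp; apply: hF => //; apply: rcomm_swp.
move=> s; rewrite !cjE gV // gV //.
have gc : forall z, g (r z) = r (g z) := rcomm_swp j y1.
by rewrite -gj -gc !(inj_eq perm_inj).
Qed.

Lemma Mab_SS a b : Mab n.+2 a b.+1 = n.+2 * n.+1 * Mab n a b.
Proof.
apply/eqP; rewrite -(eqn_pmul2l (isT : 0 < 4)); apply/eqP.
rewrite /Mab big_distrr /=.
transitivity (\sum_(s in pm M) #|P2 s| * (Xstat s ^_ a * (Ystat s).-1 ^_ b)).
  by apply: eq_bigr => s sp; rewrite Y_P2 // ffactnS -!mulnA; congr (_ * _); rewrite mulnCA.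
rewrite (@sum_cardP n.+2 (@P2 _) _ y0); first last.
- by move=> g s gc sp; rewrite X_cj // Y_cj.
- by move=> g s x gc; rewrite P2_cj.
rewrite sum_P2_split; last by move=> g s gc sp; rewrite X_cj // Y_cj.
rewrite sum_ext2 mulnA.
have -> : M * (M - 2) = 4 * (n.+2 * n.+1).
  rewrite -!mul2n; lia.
rewrite -!mulnA; congr (_ * (_ * (_ * _))).
by apply: eq_bigr => t tp; rewrite X_ext2 // Y_ext2.
Qed.

End Inst2.

Lemma card_pm0 : #|pm 0.*2| = 1.
Proof.
have -> : pm 0.*2 = [set: {perm 'I_0}].
  apply/setP => s; rewrite !inE; apply/forallP => [[i hi]]; by [].
by rewrite cardsT card_Sn.
Qed.

Lemma card_pm n : #|pm n.*2| = df n.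
Proof.
elim: n => [|n IH]; first exact: card_pm0.
by rewrite card_pm1 IH.
Qed.

Lemma X_le n (s : {perm 'I_(n.*2)}) : s \in pm n.*2 -> 2 * Xstat s <= n.*2.
Proof. move=> sp; rewrite -X_P1 //; have := max_card (mem (P1 s)); by rewrite card_ord. Qed.

Lemma Y_le n (s : {perm 'I_(n.*2)}) : s \in pm n.*2 -> 4 * Ystat s <= n.*2.
Proof. move=> sp; rewrite -Y_P2 //; have := max_card (mem (P2 s)); by rewrite card_ord. Qed.

Lemma Mab00 n : Mab n 0 0 = df n.
Proof. by rewrite /Mab -card_pm -sum1_card; apply: eq_bigr. Qed.

Lemma Mab_0S a b : Mab 0 a.+1 b = 0.
Proof.
apply: big1 => s sp; have := X_le sp.
have -> : Xstat s = 0 by have := X_le sp; lia.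
by rewrite ffact0n.
Qed.

Lemma Mab_small n b : n < 2 -> Mab n 0 b.+1 = 0.
Proof.
move=> hn; apply: big1 => s sp.
have -> : Ystat s = 0 by have := Y_le sp; lia.
by rewrite ffact0n muln0.
Qed.

Lemma Mab_closed n a b : Mab n a b = n ^_ (a + b.*2) * df (n - (a + b.*2)).
Proof.
elim: a n => [|a IH] n.
  elim: b n => [|b IHb] n; first by rewrite Mab00 ffactn0 subn0 mul1n.
  case: n => [|[|n]]; first by rewrite Mab_small // ffact_small //=; lia.
    by rewrite Mab_small // ffact_small //=; lia.
  rewrite Mab_SS IHb add0n doubleS !ffactSS !subSS; lia.
case: n => [|n]; first by rewrite Mab_0S ffact_small //; lia.
by rewrite Mab_S IH addSn ffactSS subSS mulnA.
Qed.

Import Order.TTheory GRing.Theory Num.Theory.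
Local Open Scope ring_scope.
Bind Scope ring_scope with R.

Definition cv (u : nat -> R) (l : R) :=
  forall e : R, 0 < e -> exists N, forall n, (N <= n)%N -> `|u n - l| < e.

Lemma cvE u l : cv u l <-> Un_cv u l.
Proof.
split => h e he.
  have he' : 0 < e by apply/RltP.
  case: (h e he') => N hN; exists N => n /ssrnat.leP hn; rewrite RdistE; apply/RltP; exact: hN.
have he' : Rlt 0 e by apply/RltP.
case: (h e he') => N hN; exists N => n hn; have := hN n (elimT ssrnat.leP hn).
by rewrite RdistE => /RltP.
Qed.

Lemma cv_add u v l1 l2 : cv u l1 -> cv v l2 -> cv (fun n => u n + v n) (l1 + l2).
Proof. move=> /cvE h1 /cvE h2; apply/cvE; exact: CV_plus. Qed.

Lemma cv_mul u v l1 l2 : cv u l1 -> cv v l2 -> cv (fun n => u n * v n) (l1 * l2).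
Proof. move=> /cvE h1 /cvE h2; apply/cvE; exact: CV_mult. Qed.

Lemma cv_const c : cv (fun _ => c) c.
Proof. move=> e he; exists 0%N => n _; by rewrite subrr normr0. Qed.

Lemma cv_ext u v l : (forall n, u n = v n) -> cv u l -> cv v l.
Proof. move=> h hu e he; case: (hu e he) => N hN; exists N => n hn; rewrite -h; exact: hN. Qed.

Lemma cv_scale c u l : cv u l -> cv (fun n => c * u n) (c * l).
Proof. move=> h; exact: cv_mul (cv_const c) h. Qed.

Lemma cv_shift u l : cv (fun n => u n.+1) l -> cv u l.
Proof.
move=> h e he; case: (h e he) => N hN; exists N.+1 => n hn.
case: n hn => // n hn; exact: hN.
Qed.

Lemma cv_sum K (u : nat -> nat -> R) (v : nat -> R) :
  (forall j, cv (fun n => u n j) (v j)) ->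
  cv (fun n => \sum_(0 <= j < K) u n j) (\sum_(0 <= j < K) v j).
Proof.
move=> h; elim: K => [|K IH].
  rewrite big_geq //; apply: cv_ext (cv_const 0) => n; by rewrite big_geq.
rewrite big_nat_recr //=; apply: cv_ext (cv_add IH (h K)) => n.
by rewrite big_nat_recr.
Qed.

Lemma cv_le_lim (P : nat -> R) S : (forall N, P N <= P N.+1) -> cv P S -> forall N, P N <= S.
Proof.
move=> inc h N; rewrite leNgt; apply/negP => hlt.
have he : 0 < P N - S by lra.
case: (h _ he) => K hK.
have mono : forall i, P N <= P (N + i)%N.
  elim=> [|i IH]; first by rewrite addn0.
  apply: le_trans IH _; by rewrite addnS.
have := hK (N + K)%N (leq_addl _ _); have := mono K.
move=> h1; rewrite ltr_norml => /andP [_ h2]; lra.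
Qed.

Definition psum (F : nat -> R) N := \sum_(0 <= j < N.+1) F j.

Lemma tannery (u : nat -> nat -> R) (v M : nat -> R) (L SM : R) :
  (forall n j, `|u n j| <= M j) ->
  cv (psum M) SM ->
  (forall j, cv (fun n => u n j) (v j)) ->
  cv (psum v) L ->
  cv (fun n => psum (u n) n) L.
Proof.
move=> hM hSM hu hv e he.
have M0 : forall j, 0 <= M j by move=> j; apply: le_trans (hM 0%N j).
have inc : forall N, psum M N <= psum M N.+1.
  by move=> N; rewrite /psum (big_nat_recr N.+1) //= lerDl.
have le_SM := cv_le_lim inc hSM.
have e3 : 0 < e / 3 by lra.
case: (hSM _ e3) => K1 hK1.
case: (hv _ e3) => K2 hK2.
pose K := maxn K1 K2.
have hK1' := hK1 K (leq_maxl _ _).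
have hK2' := hK2 K (leq_maxr _ _).
have hd : forall j, cv (fun n => u n j - v j) 0.
  move=> j e' he'; case: (hu j e' he') => N hN; exists N => n hn; rewrite subr0; exact: hN.
have hs := cv_sum K.+1 hd.
rewrite big1_eq in hs.
case: (hs _ e3) => N0 hN0.
exists (maxn N0 K) => n hn.
have hnK : (K <= n)%N by apply: leq_trans hn; apply: leq_maxr.
have hnN : (N0 <= n)%N by apply: leq_trans hn; apply: leq_maxl.
have h0 := hN0 n hnN; rewrite subr0 in h0.
have split : forall F : nat -> R, psum F n = psum F K + \sum_(K.+1 <= j < n.+1) F j.
  by move=> F; rewrite /psum (big_cat_nat _ (n := K.+1)).
have tail : `|\sum_(K.+1 <= j < n.+1) u n j| <= \sum_(K.+1 <= j < n.+1) M j.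
  apply: le_trans (ler_norm_sum _ _ _) _; apply: ler_sum => j _; exact: hM.
have tailM : \sum_(K.+1 <= j < n.+1) M j <= SM - psum M K.
  have := le_SM n; rewrite split; lra.
have eq1 : psum (u n) n - L =
   (\sum_(0 <= j < K.+1) (u n j - v j)) + \sum_(K.+1 <= j < n.+1) u n j + (psum v K - L).
  rewrite split /psum sumrB; lra.
rewrite eq1.
have := ler_normD (\sum_(0 <= j < K.+1) (u n j - v j) + \sum_(K.+1 <= j < n.+1) u n j) (psum v K - L).
have := ler_normD (\sum_(0 <= j < K.+1) (u n j - v j)) (\sum_(K.+1 <= j < n.+1) u n j).
move: hK1'; rewrite ltr_norml => /andP [hk1 hk2].
lra.
Qed.

Lemma cv_half : cv (fun n => n.+1%:R / (n.*2.+1)%:R) (2^-1).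
Proof.
move=> e he.
exists (Num.Def.archi_bound (e^-1)) => n hn.
have hb0 : 0 <= e^-1 by rewrite invr_ge0; lra.
have hb := archi_boundP hb0.
have hN : (Num.Def.archi_bound (e^-1))%:R <= n%:R :> R by rewrite ler_nat.
set t : R := (n.*2.+1)%:R.
have tE : t = 2 * n%:R + 1 by rewrite /t -addn1 -mul2n natrD natrM.
have ht : 0 < t by rewrite tE; have : 0 <= n%:R :> R by []; lra.
have eq1 : n.+1%:R / t - 2^-1 = (2 * t)^-1.
  rewrite -addn1 natrD tE; field; rewrite -tE; lra.
rewrite eq1 ger0_norm; last by rewrite invr_ge0; lra.
have het : 1 < e * (2 * t).
  have h1 : e^-1 < t by rewrite tE; lra.
  have h2 : e * e^-1 < e * t by rewrite ltr_pM2l.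
  have h3 : e * e^-1 = 1 by rewrite mulfV //; lra.
  rewrite mulrCA; lra.
rewrite -[(2 * t)^-1]mul1r ltr_pdivrMr; last by lra.
exact: het.
Qed.

Definition rho n m : R := (n ^_ m * df (n - m))%:R / (df n)%:R.

Lemma df_gt0 n : (0 < df n)%N.
Proof. by elim: n => //= n IH; rewrite muln_gt0 IH. Qed.

Lemma dfR_gt0 n : 0 < (df n)%:R :> R.
Proof. by rewrite ltr0n df_gt0. Qed.

Lemma rho_n0 n : rho n 0 = 1.
Proof. rewrite /rho ffactn0 subn0 mul1n divff //; have := dfR_gt0 n; lra. Qed.

Lemma rho_0S m : rho 0 m.+1 = 0.
Proof. by rewrite /rho ffact0n /= mul0n mul0r. Qed.

Lemma rho_SS n m : rho n.+1 m.+1 = n.+1%:R / (n.*2.+1)%:R * rho n m.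
Proof.
rewrite /rho ffactSS subSS /= !natrM.
have h1 := dfR_gt0 n.
have h2 : 0 < (n.*2.+1)%:R :> R by rewrite ltr0n.
field; lra.
Qed.

Lemma rho_bounds m n : 0 <= rho n m <= 1.
Proof.
elim: m n => [|m IH] n; first by rewrite rho_n0; lra.
case: n => [|n]; first by rewrite rho_0S; lra.
rewrite rho_SS.
have h2 : 0 < (n.*2.+1)%:R :> R by rewrite ltr0n.
have hq : 0 <= (n.+1%:R / (n.*2.+1)%:R : R) <= 1.
  apply/andP; split; first by rewrite divr_ge0 // ler0n.
  rewrite ler_pdivrMr // mul1r ler_nat; lia.
case/andP: (IH n) => a1 a2; case/andP: hq => q1 q2.
apply/andP; split; first exact: mulr_ge0.
move: (n.+1%:R / _) (rho n m) q1 q2 a1 a2 => q p q1 q2 a1 a2; nra.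
Qed.

Lemma rho_cv m : cv (fun n => rho n m) (2^-1 ^+ m).
Proof.
elim: m => [|m IH].
  by rewrite expr0; apply: cv_ext (cv_const 1) => n; rewrite rho_n0.
apply: cv_shift; rewrite exprS.
apply: cv_ext (cv_mul cv_half IH) => n; by rewrite rho_SS.
Qed.

Lemma cv_exp (z : R) : cv (psum (fun j => (j`!%:R)^-1 * z ^+ j)) (exp z).
Proof.
apply/cvE => e he.
have h := proj2_sig (exist_exp z).
case: (h e he) => N hN; exists N => n hn.
have -> : psum (fun j => (j`!%:R)^-1 * z ^+ j) n =
   sum_f_R0 (fun i => Rmult (Rinv (INR (Factorial.fact i))) (pow z i)) n.
  rewrite sum_f_R0E /psum; apply: eq_bigr => j _.
  by rewrite INRE factE RinvE RpowE RmultE.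
exact: hN.
Qed.

Lemma psum_ext (F G : nat -> R) n : (forall j, F j = G j) -> psum F n = psum G n.
Proof. by move=> h; apply: eq_bigr => j _. Qed.

Lemma psum_scale c (F : nat -> R) n : psum (fun j => c * F j) n = c * psum F n.
Proof. by rewrite /psum mulr_sumr. Qed.

Lemma cv_psum_scale c (F : nat -> R) L : cv (psum F) L -> cv (psum (fun j => c * F j)) (c * L).
Proof. move=> h; apply: cv_ext (cv_scale c h) => n; by rewrite /psum mulr_sumr. Qed.

Lemma psumS (F : nat -> R) n : psum F n.+1 = psum F n + F n.+1.
Proof. by rewrite /psum big_nat_recr. Qed.

Lemma psum_shift k (w : nat -> R) d :
  psum (fun a => if (k <= a)%N then w (a - k)%N else 0) (k + d) = psum w d.
Proof.
elim: d => [|d IH].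
  rewrite addn0 /psum big_nat_recr //= leqnn subnn big_nat1.
  rewrite (_ : \sum_(0 <= a < k) _ = 0) ?add0r //.
  rewrite big_nat_cond big1 // => a /andP [/andP [_ ha] _]; by rewrite leqNgt ha.
rewrite addnS !psumS IH; congr (_ + _).
by rewrite ifT ?subSn ?addKn //; lia.
Qed.

Lemma cv_shiftk k (w : nat -> R) L :
  cv (psum w) L -> cv (psum (fun a => if (k <= a)%N then w (a - k)%N else 0)) L.
Proof.
move=> h e he; case: (h e he) => N hN; exists (N + k)%N => n hn.
have -> : n = (k + (n - k))%N by lia.
rewrite psum_shift; apply: hN; lia.
Qed.

Definition alpha k a : R :=
  if (k <= a)%N then (-1) ^+ (a - k) / (k`!%:R * (a - k)`!%:R) else 0.
Definition delta0 a : R := (a == 0)%N%:R.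

Lemma fact_neq0 j : (j`!%:R : R) != 0.
Proof. by rewrite pnatr_eq0 -lt0n fact_gt0. Qed.

Lemma cv_alpha k x : cv (psum (fun a => alpha k a * x ^+ a)) (x ^+ k / k`!%:R * exp (- x)).
Proof.
have h := cv_shiftk k (cv_psum_scale (x ^+ k / k`!%:R) (cv_exp (- x))).
apply: cv_ext h => n; rewrite /psum; apply: eq_bigr => a _.
rewrite /alpha; case: leqP => hka; last by rewrite mul0r.
have ea : x ^+ a = x ^+ k * x ^+ (a - k) by rewrite -exprD subnKC.
rewrite ea (exprNn x) invfM.
move: (k`!%:R) ((a - k)`!%:R) (x ^+ k) (x ^+ (a - k)) ((-1) ^+ (a - k)) => p q u v w.
ring.
Qed.

Lemma cv_abs_alpha k : cv (psum (fun a => `|alpha k a|)) ((k`!%:R)^-1 * exp 1).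
Proof.
have h := cv_shiftk k (cv_psum_scale ((k`!%:R)^-1) (cv_exp 1)).
apply: cv_ext h => n; rewrite /psum; apply: eq_bigr => a _.
rewrite /alpha; case: leqP => hka; last by rewrite normr0.
rewrite normrM normrX normrN1 !expr1n normfV normrM !normr_nat invfM mulr1 mul1r.
done.
Qed.

Lemma cv_delta0 (y : R) : cv (psum (fun b => delta0 b * y ^+ b)) 1.
Proof.
apply: cv_ext (cv_const 1) => n; rewrite /psum big_ltn // /delta0 eqxx mul1r expr0.
rewrite big_nat_cond big1 ?addr0 // => i /andP [/andP [hi _] _].
by rewrite eqn0Ngt hi mul0r.
Qed.

Lemma cv_abs_delta0 : cv (psum (fun b => `|delta0 b|)) 1.
Proof.
apply: cv_ext (cv_delta0 1) => n; apply: eq_bigr => b _.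
by rewrite expr1n mulr1 /delta0 normr_nat.
Qed.

Lemma ffact_add n k j : (n ^_ (k + j) = n ^_ k * (n - k) ^_ j)%N.
Proof.
elim: j => [|j IH]; first by rewrite addn0 ffactn0 muln1.
by rewrite addnS !ffactnSr IH -mulnA subnDA.
Qed.

Lemma alt_binom d : \sum_(0 <= j < d.+1) (-1) ^+ j * ('C(d, j))%:R = (d == 0)%N%:R :> R.
Proof.
have := exprDn (1 : R) (-1) d; rewrite subrr expr0n => ->.
rewrite big_mkord; apply: eq_bigr => i _; by rewrite expr1n mul1r mulr_natr.
Qed.

Lemma inv_alpha k X N : (X <= N)%N ->
  \sum_(0 <= a < N.+1) alpha k a * (X ^_ a)%:R = (X == k)%:R.
Proof.
move=> hXN.
rewrite (big_cat_nat _ (n := X.+1)) //= (_ : \sum_(X.+1 <= a < N.+1) _ = 0) ?addr0; last first.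
  rewrite big_nat_cond big1 // => a /andP [/andP [ha _] _].
  by rewrite ffact_small // mulr0.
rewrite -/(psum _ X).
case: (leqP k X) => hk; last first.
  rewrite /psum big_nat_cond big1; last first.
    move=> a /andP [/andP [_ ha] _]; rewrite /alpha ifF ?mul0r //; apply/negbTE; rewrite -ltnNge; lia.
  by rewrite (_ : (X == k) = false) //; apply/negbTE; lia.
have -> : X = (k + (X - k))%N by lia.
move: (X - k)%N => d.
rewrite (psum_ext (G := fun a => if (k <= a)%N then
   ('C(k + d, k))%:R * ((-1) ^+ (a - k) * ('C(d, a - k))%:R) else 0)); last first.
  move=> a; rewrite /alpha; case: leqP => hka; last by rewrite mul0r.
  have [j ->] : exists j, a = (k + j)%N by exists (a - k)%N; lia.
  rewrite !addKn ffact_add addKn -!bin_ffact !natrM.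
  have := fact_neq0 k; have := fact_neq0 j.
  move: (k`!%:R) (j`!%:R) ((-1) ^+ j) ('C(k + d, k)%:R) ('C(d, j)%:R) => p q w c1 c2 hq hp.
  field; by apply/andP.
have := psum_shift k (fun j => 'C(k + d, k)%:R * ((-1) ^+ j * ('C(d, j))%:R)) d.
rewrite /= => ->.
rewrite psum_scale /psum alt_binom.
case: d => [|d]; first by rewrite addn0 binn !eqxx mul1r.
have -> : (k + d.+1 == k) = false by apply/negbTE; lia.
by rewrite mulr0.
Qed.

Lemma inv_delta0 X N : \sum_(0 <= a < N.+1) delta0 a * (X ^_ a)%:R = (true)%:R.
Proof.
rewrite big_ltn // /delta0 eqxx mul1r ffactn0.
rewrite big_nat_cond big1 ?addr0 // => i /andP [/andP [hi _] _].
by rewrite eqn0Ngt hi mul0r.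
Qed.

Lemma numer_expand n (phi psi : nat -> bool) (al be : nat -> R) :
  (forall X N, (X <= N)%N -> \sum_(0 <= a < N.+1) al a * (X ^_ a)%:R = (phi X)%:R) ->
  (forall Y N, (Y <= N)%N -> \sum_(0 <= b < N.+1) be b * (Y ^_ b)%:R = (psi Y)%:R) ->
  (#|[set s in pm n.*2 | phi (Xstat s) && psi (Ystat s)]|)%:R =
  \sum_(0 <= a < n.+1) al a * \sum_(0 <= b < n.+1) be b * (Mab n a b)%:R :> R.
Proof.
move=> ha hb.
rewrite -sum1_card natr_sum.
rewrite (eq_bigl (fun s => (s \in pm n.*2) && (phi (Xstat s) && psi (Ystat s)))); last first.
  by move=> s; rewrite inE.
transitivity (\sum_(s in pm n.*2) (phi (Xstat s))%:R * (psi (Ystat s))%:R : R).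
  rewrite big_mkcondr; apply: eq_bigr => s _.
  by case: (phi _); case: (psi _); rewrite /= ?mul1r ?mul0r.
transitivity (\sum_(s in pm n.*2) \sum_(0 <= a < n.+1) \sum_(0 <= b < n.+1)
   al a * be b * ((Xstat s) ^_ a * (Ystat s) ^_ b)%:R : R).
  apply: eq_bigr => s sp.
  have hx : (Xstat s <= n)%N by have := X_le sp; lia.
  have hy : (Ystat s <= n)%N by have := Y_le sp; lia.
  rewrite -(ha _ _ hx) -(hb _ _ hy) mulr_suml; apply: eq_bigr => a _.
  rewrite mulr_sumr; apply: eq_bigr => b _; rewrite natrM.
  move: (al a) (be b) ((Xstat s ^_ a)%:R) ((Ystat s ^_ b)%:R) => p q u v; ring.
rewrite exchange_big; apply: eq_bigr => a _; rewrite exchange_big /= mulr_sumr.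
apply: eq_bigr => b _; rewrite /Mab natr_sum !mulr_sumr; apply: eq_bigr => s _.
by rewrite mulrA.
Qed.

Lemma prob_expand n (phi psi : nat -> bool) (al be : nat -> R) :
  (forall X N, (X <= N)%N -> \sum_(0 <= a < N.+1) al a * (X ^_ a)%:R = (phi X)%:R) ->
  (forall Y N, (Y <= N)%N -> \sum_(0 <= b < N.+1) be b * (Y ^_ b)%:R = (psi Y)%:R) ->
  @prob_pm n (fun s => phi (Xstat s) && psi (Ystat s)) =
  psum (fun a => al a * psum (fun b => be b * rho n (a + b.*2)) n) n.
Proof.
move=> ha hb; rewrite /prob_pm RdivE !INRE (numer_expand n ha hb) card_pm.
rewrite /psum mulr_suml; apply: eq_bigr => a _; rewrite -mulrA mulr_suml; congr (_ * _).
apply: eq_bigr => b _; rewrite -mulrA; congr (_ * _).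
by rewrite Mab_closed /rho.
Qed.

Lemma cv_eqlim u l l' : cv u l -> l = l' -> cv u l'.
Proof. by move=> h <-. Qed.

Lemma psum_ge_inc (F : nat -> R) : (forall j, 0 <= F j) -> forall N, psum F N <= psum F N.+1.
Proof. by move=> h N; rewrite psumS lerDl. Qed.

Lemma main_limit (al be : nat -> R) (La Lb SA SB : R) :
  cv (psum (fun a => `|al a|)) SA -> cv (psum (fun b => `|be b|)) SB ->
  cv (psum (fun a => al a * 2^-1 ^+ a)) La -> cv (psum (fun b => be b * 4^-1 ^+ b)) Lb ->
  cv (fun n => psum (fun a => al a * psum (fun b => be b * rho n (a + b.*2)) n) n) (La * Lb).
Proof.
move=> hA hB hLa hLb.
have psB : forall N, psum (fun b => `|be b|) N <= SB.
  apply: cv_le_lim hB; apply: psum_ge_inc => j; exact: normr_ge0.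
apply: (tannery (M := fun a => `|al a| * SB) (v := fun a => al a * 2^-1 ^+ a * Lb) (SM := SA * SB)).
- move=> n a; rewrite normrM; apply: ler_wpM2l; first exact: normr_ge0.
  apply: le_trans (psB n); apply: le_trans (ler_norm_sum _ _ _) _.
  apply: ler_sum => b _; rewrite normrM.
  have := rho_bounds (a + b.*2) n; case/andP => r0 r1.
  rewrite (ger0_norm r0); apply: ler_piMr => //; exact: normr_ge0.
- apply: cv_ext (cv_mul hA (cv_const SB)) => n; by rewrite /psum mulr_suml.
- move=> a; rewrite -mulrA; apply: cv_scale.
  apply: (tannery (M := fun b => `|be b|) (v := fun b => 2^-1 ^+ a * (be b * 4^-1 ^+ b)) (SM := SB)) => //.
  + move=> n b; rewrite normrM.
    have := rho_bounds (a + b.*2) n; case/andP => r0 r1.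
    rewrite (ger0_norm r0); apply: ler_piMr => //; exact: normr_ge0.
  + move=> b; apply: cv_eqlim (cv_scale (be b) (rho_cv (a + b.*2))) _.
    have h4 : (2 ^+ 2 : R) = 4 by rewrite expr2 -natrM.
    rewrite exprD -mul2n exprM [2^-1 ^+ 2]exprVn h4.
    by rewrite mulrCA.
  + exact: cv_psum_scale.
- apply: cv_ext (cv_mul hLa (cv_const Lb)) => n; by rewrite /psum mulr_suml.
Qed.

Lemma prob_ext n (P Q : pred {perm 'I_(n.*2)}) : (forall s, P s = Q s) ->
  @prob_pm n P = @prob_pm n Q.
Proof.
move=> h; rewrite /prob_pm; congr (Rdiv (INR _) _); apply: eq_card => s; by rewrite !inE h.
Qed.

Lemma limX k : cv (fun n => @prob_pm n (fun s => Xstat s == k))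
  ((2^-1) ^+ k / k`!%:R * exp (- 2^-1) * 1).
Proof.
apply: cv_ext (main_limit (cv_abs_alpha k) cv_abs_delta0 (cv_alpha k _) (cv_delta0 _)) => n.
rewrite (@prob_ext n _ (fun s => (Xstat s == k) && true)); last by move=> s; rewrite andbT.
rewrite (prob_expand n (phi := fun X => X == k) (psi := fun _ => true) (al := alpha k) (be := delta0)) //.
- move=> X N h; exact: inv_alpha.
- move=> Y N h; exact: inv_delta0.
Qed.

Lemma limY l : cv (fun n => @prob_pm n (fun s => Ystat s == l))
  (1 * ((4^-1) ^+ l / l`!%:R * exp (- 4^-1))).
Proof.
apply: cv_ext (main_limit cv_abs_delta0 (cv_abs_alpha l) (cv_delta0 _) (cv_alpha l _)) => n.
rewrite (@prob_ext n _ (fun s => true && (Ystat s == l))) //.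
rewrite (prob_expand n (phi := fun _ => true) (psi := fun Y => Y == l) (al := delta0) (be := alpha l)) //.
- move=> X N h; exact: inv_delta0.
- move=> Y N h; exact: inv_alpha.
Qed.

Lemma limXY k l : cv (fun n => @prob_pm n (fun s => (Xstat s == k) && (Ystat s == l)))
  ((2^-1) ^+ k / k`!%:R * exp (- 2^-1) * ((4^-1) ^+ l / l`!%:R * exp (- 4^-1))).
Proof.
apply: cv_ext (main_limit (cv_abs_alpha k) (cv_abs_alpha l) (cv_alpha k _) (cv_alpha l _)) => n.
rewrite (prob_expand n (phi := fun X => X == k) (psi := fun Y => Y == l) (al := alpha k) (be := alpha l)) //.
- move=> X N h; exact: inv_alpha.
- move=> Y N h; exact: inv_alpha.
Qed.

Lemma IZR_neg p : IZR (Zneg p) = - IZR (Zpos p).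
Proof. exact: (opp_IZR (Zpos p)). Qed.

Lemma IZR_pos p : IZR (Zpos p) = (nat_of_pos p)%:R.
Proof. by rewrite IZRposE INRE. Qed.

Lemma eq_half : Rdiv (IZR (Zneg xH)) (IZR (Zpos (xO xH))) = - 2^-1.
Proof. rewrite IZR_neg !IZR_pos RdivE /=; ring. Qed.
Lemma eq_quarter : Rdiv (IZR (Zneg xH)) (IZR (Zpos (xO (xO xH)))) = - 4^-1.
Proof. rewrite IZR_neg !IZR_pos RdivE /=; ring. Qed.
Lemma eq_34 : Rdiv (IZR (Zneg (xI xH))) (IZR (Zpos (xO (xO xH)))) = - 2^-1 + - 4^-1.
Proof. rewrite IZR_neg !IZR_pos RdivE /=; by field. Qed.

Lemma final_X k : Un_cv (fun n => @prob_pm n (fun s => Xstat s == k))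
  (Rdiv (exp (Rdiv (IZR (Zneg xH)) (IZR (Zpos (xO xH)))))
        (Rmult (pow (IZR (Zpos (xO xH))) k) (INR (fact k)))).
Proof.
apply/cvE; apply: cv_eqlim (limX k) _.
rewrite eq_half RdivE RmultE RpowE INRE factE IZR_pos /= exprVn invfM.
move: (exp _) ((2%:R ^+ k)^-1) ((k`!%:R)^-1) => p q r; ring.
Qed.

Lemma final_Y l : Un_cv (fun n => @prob_pm n (fun s => Ystat s == l))
  (Rdiv (exp (Rdiv (IZR (Zneg xH)) (IZR (Zpos (xO (xO xH))))))
        (Rmult (pow (IZR (Zpos (xO (xO xH)))) l) (INR (fact l)))).
Proof.
apply/cvE; apply: cv_eqlim (limY l) _.
rewrite eq_quarter RdivE RmultE RpowE INRE factE IZR_pos /= exprVn invfM.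
move: (exp _) ((4%:R ^+ l)^-1) ((l`!%:R)^-1) => p q r; ring.
Qed.

Lemma final_XY k l : Un_cv (fun n => @prob_pm n (fun s => (Xstat s == k) && (Ystat s == l)))
  (Rdiv (exp (Rdiv (IZR (Zneg (xI xH))) (IZR (Zpos (xO (xO xH))))))
     (Rmult (Rmult (Rmult (pow (IZR (Zpos (xO xH))) k) (pow (IZR (Zpos (xO (xO xH)))) l))
        (INR (fact k))) (INR (fact l)))).
Proof.
apply/cvE; apply: cv_eqlim (limXY k l) _.
rewrite eq_34 -RplusE -expRD.
rewrite !RdivE !RmultE !RpowE !INRE !factE !IZR_pos /= !exprVn !invfM.
ring.
Qed.

Close Scope ring_scope.
Delimit Scope R_scope with R.
Bind Scope R_scope with R.

Theorem corollary5p2 : forall k l : nat,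
  Un_cv (fun n => @prob_pm n (fun s => Xstat s == k))
        (exp (-1/2) / (2 ^ k * INR (fact k)))%R /\
  Un_cv (fun n => @prob_pm n (fun s => Ystat s == l))
        (exp (-1/4) / (4 ^ l * INR (fact l)))%R /\
  Un_cv (fun n => @prob_pm n (fun s => (Xstat s == k) && (Ystat s == l)))
        (exp (-3/4) / (2 ^ k * 4 ^ l * INR (fact k) * INR (fact l)))%R.
Proof.
move=> k l; split; [exact: final_X | split; [exact: final_Y | exact: final_XY]].
Qed.
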